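(* Let $S$ be a semigroup generated by a finite set $A$. Then $S$ is right simple if and only if the semimetric space $(S,d_A)$ is quasi-metric.
   Context: $d_A(x,y)=\inf\{|w|:w\in A^*,\ xw=y\}$, where $A^*$ is the free monoid on $A$ (empty word allowed) and $\inf\emptyset=\infty$. A semigroup is right simple if it has a single $\mathcal{R}$-class, i.e. $xS^1=yS^1$ for all $x,y\in S$ ($S^1$ being $S$ with an identity adjoined). A semimetric space $(X,d)$ (distance values in $\mathbb{R}^{\ge0}\cup\{\infty\}$, zero exactly on the diagonal, triangle inequality, not necessarily symmetric) is quasi-metric if it is strongly connected (no two points at distance $\infty$) and there exist $1\le\lambda<\infty$, $0\le\epsilon<\infty$ with $d(y,x)\le\lambda d(x,y)+\epsilon$ for all $x,y\in X$. *)

(* Defs.v *)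
From Stdlib Require Import Reals List.
From Coquelicot Require Import Coquelicot.
Open Scope R_scope.
Import ListNotations.

Definition associative_op {S : Type} (mul : S -> S -> S) : Prop :=
  forall x y z, mul x (mul y z) = mul (mul x y) z.

Definition word_over {S : Type} (A : list S) (w : list S) : Prop :=
  List.Forall (fun a => In a A) w.

Definition act {S : Type} (mul : S -> S -> S) (x : S) (w : list S) : S :=
  fold_left mul w x.

(* Value in S of a nonempty word a1 ... an. *)
Definition eval_word {S : Type} (mul : S -> S -> S) (a : S) (w : list S) : S :=
  act mul a w.

Definition generated_by {S : Type} (mul : S -> S -> S) (A : list S) : Prop :=
  forall s : S, exists a w, word_over A (a :: w) /\ s = eval_word mul a w.

(* d_A(x,y) = inf { |w| : w in A^*, x w = y }, with inf of the empty set = +oo. *)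
Definition d_A {S : Type} (mul : S -> S -> S) (A : list S) (x y : S) : Rbar :=
  Glb_Rbar (fun r => exists w, word_over A w /\ act mul x w = y
                               /\ r = INR (length w)).

(* S^1 = S with an identity adjoined (None is the identity). *)
Definition mul1 {S : Type} (mul : S -> S -> S) (x : S) (u : option S) : S :=
  match u with None => x | Some s => mul x s end.

(* Right simple: x S^1 = y S^1 for all x, y. *)
Definition right_simple {S : Type} (mul : S -> S -> S) : Prop :=
  forall x y z : S,
    (exists u : option S, z = mul1 mul x u) <-> (exists u : option S, z = mul1 mul y u).

Definition semimetric {X : Type} (d : X -> X -> Rbar) : Prop :=
  (forall x y, Rbar_le (Finite 0) (d x y) /\ d x y <> m_infty) /\
  (forall x y, d x y = Finite 0 <-> x = y) /\
  (forall x y z, Rbar_le (d x z) (Rbar_plus (d x y) (d y z))).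

Definition quasi_metric {X : Type} (d : X -> X -> Rbar) : Prop :=
  semimetric d /\
  (forall x y, d x y <> p_infty) /\
  (exists lam eps : R, 1 <= lam /\ 0 <= eps /\
     forall x y, Rbar_le (d y x) (Rbar_plus (Rbar_mult (Finite lam) (d x y)) (Finite eps))).

(* Main.v *)
Require Import Defs.
From Stdlib Require Import Reals List Lia Lra Classical.
From Coquelicot Require Import Coquelicot.
Import ListNotations.
Open Scope R_scope.

Lemma act_app {S} (mul : S->S->S) x u v :
  act mul x (u ++ v) = act mul (act mul x u) v.
Proof. unfold act. apply fold_left_app. Qed.

Lemma act_mul {S} (mul:S->S->S) (H: associative_op mul) z c w :
  act mul (mul z c) w = mul z (act mul c w).
Proof.
  revert c; induction w as [|a w IH]; intros c; [reflexivity|].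
  unfold act in *; simpl. rewrite <- H. apply IH.
Qed.

Lemma nat_min (P : nat -> Prop) :
  (exists n, P n) -> exists n, P n /\ forall m, P m -> (n <= m)%nat.
Proof.
  intros [n Hn]. revert Hn.
  induction n as [n IH] using (well_founded_induction Wf_nat.lt_wf). intros Hn.
  destruct (classic (exists m, P m /\ (m < n)%nat)) as [[m [Hm Hlt]]|Hno].
  - exact (IH m Hlt Hm).
  - exists n; split; auto. intros m Hm.
    destruct (Nat.le_gt_cases n m); auto. exfalso; apply Hno; eauto.
Qed.

Lemma d_char {S} (mul:S->S->S) A x y :
  (d_A mul A x y = p_infty /\ ~ exists w, word_over A w /\ act mul x w = y) \/
  (exists w, word_over A w /\ act mul x w = y /\
     d_A mul A x y = Finite (INR (length w)) /\
     forall w', word_over A w' -> act mul x w' = y -> (length w <= length w')%nat).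
Proof.
  destruct (classic (exists w, word_over A w /\ act mul x w = y)) as [Hex|Hno].
  - right.
    destruct (nat_min (fun n => exists w, word_over A w /\ act mul x w = y /\ length w = n))
      as [n [[w [Hw [Hxw Hl]]] Hmin]].
    { destruct Hex as [w [? ?]]; eauto. }
    exists w; repeat split; auto.
    + unfold d_A.
      destruct (Glb_Rbar_correct (fun r => exists w, word_over A w /\ act mul x w = y
                               /\ r = INR (length w))) as [Hlb Hglb].
      apply Rbar_le_antisym.
      * apply Hlb. eauto.
      * apply Hglb. intros r [w' [Hw' [Hx' ->]]]. simpl. apply le_INR.
        rewrite Hl. apply Hmin. eauto.
    + intros w' Hw' Hx'. rewrite Hl. apply Hmin. eauto.
  - left. split; auto. unfold d_A.
    destruct (Glb_Rbar_correct (fun r => exists w, word_over A w /\ act mul x w = y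
                               /\ r = INR (length w))) as [_ Hglb].
    apply Rbar_le_antisym.
    + destruct (Glb_Rbar _); simpl; auto.
    + apply Hglb. intros r [w [? [? _]]]. exfalso; eauto.
Qed.

Definition ends_with {S} (mul:S->S->S) z b := z = b \/ exists z', z = mul z' b.

Lemma ends_act {S} (mul:S->S->S) A w : forall z b,
  In b A -> ends_with mul z b -> word_over A w ->
  exists b', In b' A /\ ends_with mul (act mul z w) b'.
Proof.
  induction w as [|a w IH]; intros z b Hb Hz Hw.
  - exists b; auto.
  - inversion Hw; subst. apply (IH (mul z a) a); auto. right; eauto.
Qed.

Lemma back {S} (mul:S->S->S) (H : associative_op mul) A L :
  (forall b a, In b A -> In a A -> exists u, word_over A u /\ (length u <= L)%nat
      /\ act mul (mul b a) u = b) ->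
  forall w z b, word_over A w -> In b A -> ends_with mul z b ->
  exists v, word_over A v /\ (length v <= L * length w)%nat /\ act mul (act mul z w) v = z.
Proof.
  intros HU. induction w as [|a w IH]; intros z b Hw Hb Hz.
  - exists []. split; [constructor|split; simpl; auto; lia].
  - inversion Hw; subst.
    destruct (IH (mul z a) a) as [v' [Hv' [Hl' He']]]; auto. { right; eauto. }
    destruct (HU b a) as [u [Hu [Hlu Heu]]]; auto.
    exists (v' ++ u). repeat split.
    + apply Forall_app; auto.
    + rewrite length_app. simpl length. rewrite Nat.mul_succ_r. lia.
    + rewrite act_app. change (act mul z (a :: w)) with (act mul (mul z a) w).
      rewrite He'. destruct Hz as [->|[z' ->]]; auto.
      rewrite <- H, act_mul by auto. now rewrite Heu.
Qed.

Lemma unif_bound {T} (Q : T -> nat -> Prop) (l : list T) :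
  (forall x n m, (n <= m)%nat -> Q x n -> Q x m) ->
  (forall x, In x l -> exists n, Q x n) -> exists N, forall x, In x l -> Q x N.
Proof.
  intros Hmon. induction l as [|a l IH]; intros H.
  - exists 0%nat; intros x [].
  - destruct (H a (or_introl eq_refl)) as [n Hn].
    destruct IH as [N HN]. { intros; apply H; right; auto. }
    exists (Nat.max n N). intros x [<-|Hx].
    + apply (Hmon _ n); [lia|auto].
    + apply (Hmon _ N); [lia|auto].
Qed.

Lemma rs_word {S} (mul:S->S->S) (H: associative_op mul) A
  (Hgen : generated_by mul A) x y :
  (exists u : option S, y = mul1 mul x u) ->
  exists w, word_over A w /\ act mul x w = y.
Proof.
  intros [[s|] Hu]; simpl in Hu.
  - destruct (Hgen s) as [c [w [Hw Hs]]]. exists (c :: w). split; auto.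
    change (act mul x (c::w)) with (act mul (mul x c) w).
    rewrite act_mul by auto. unfold eval_word in Hs. congruence.
  - exists []. split; [constructor|]. simpl; auto.
Qed.

Theorem proposition8p2 (S : Type) (mul : S -> S -> S) (A : list S)
  (Hassoc : associative_op mul) (Hgen : generated_by mul A) :
  right_simple mul <-> quasi_metric (d_A mul A).
Proof.
  split.
  - intros Hrs.
    assert (Hsc : forall x y, exists w, word_over A w /\ act mul x w = y).
    { intros x y. apply (rs_word mul Hassoc A Hgen).
      apply (proj2 (Hrs x y y)). exists None; reflexivity. }
    assert (Hsc' : forall x y, d_A mul A x y <> p_infty).
    { intros x y. destruct (d_char mul A x y) as [[_ Hn]|[w [_ [_ [-> _]]]]].
      - exfalso; apply Hn, Hsc.
      - discriminate. }
    split; [split; [|split]|split]; auto.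
    + intros x y. destruct (d_char mul A x y) as [[-> _]|[w [_ [_ [-> _]]]]].
      * simpl; split; auto; discriminate.
      * simpl; split; [apply pos_INR|discriminate].
    + intros x y. destruct (d_char mul A x y) as [[-> Hn]|[w [Hw [Hx [-> Hm]]]]].
      * split; [discriminate|]. intros ->. exfalso; apply Hn. exists []; split; [constructor|reflexivity].
      * split.
        -- intros He. injection He as He. change 0 with (INR 0) in He.
           apply INR_eq in He. destruct w; [|discriminate]. exact Hx.
        -- intros ->. assert (length w <= 0)%nat by (apply (Hm []); [constructor|reflexivity]).
           destruct w; [reflexivity|simpl in *; lia].
    + intros x y z.
      destruct (d_char mul A x y) as [[-> Hn]|[w1 [Hw1 [Hx1 [-> Hm1]]]]].
      * destruct (d_char mul A y z) as [[-> _]|[w2 [_ [_ [-> _]]]]];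
          destruct (d_A mul A x z); simpl; auto.
      * destruct (d_char mul A y z) as [[-> Hn]|[w2 [Hw2 [Hx2 [-> Hm2]]]]].
        -- destruct (d_A mul A x z); simpl; auto.
        -- destruct (d_char mul A x z) as [[-> Hn]|[w [Hw [Hx [-> Hm]]]]].
           ++ exfalso; apply Hn. exists (w1 ++ w2). split; [apply Forall_app; auto|].
              rewrite act_app; congruence.
           ++ simpl. rewrite <- plus_INR. apply le_INR.
              rewrite <- length_app. apply Hm; [apply Forall_app; auto|].
              rewrite act_app; congruence.
    +
      assert (HU : exists L, forall b a, In b A -> In a A -> exists u, word_over A u
                  /\ (length u <= L)%nat /\ act mul (mul b a) u = b).
      { destruct (unif_bound (fun b n => forall a, In a A -> exists u, word_over A u
                  /\ (length u <= n)%nat /\ act mul (mul b a) u = b) A) as [N HN].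
        - intros b n m Hnm Hq a Ha. destruct (Hq a Ha) as [u [? [? ?]]].
          exists u; repeat split; auto; lia.
        - intros b Hb.
          apply (unif_bound (fun a n => exists u, word_over A u
                  /\ (length u <= n)%nat /\ act mul (mul b a) u = b) A).
          + intros a n m Hnm [u [? [? ?]]]. exists u; repeat split; auto; lia.
          + intros a Ha. destruct (rs_word mul Hassoc A Hgen (mul b a) b) as [u [Hu Heu]].
            { apply (proj2 (Hrs (mul b a) b b)). exists None; reflexivity. }
            exists (length u), u; auto.
        - exists N. intros b a Hb Ha. apply HN; auto. }
      destruct HU as [L HU].
      exists (INR L + 1), 0. split; [pose proof (pos_INR L); lra|split; [lra|]].
      intros x y.
      destruct (d_char mul A x y) as [[He _]|[w [Hw [Hx [-> _]]]]].
      { exfalso; eapply Hsc'; eauto. }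
      destruct (Hgen x) as [c [w0 [Hw0 Hxe]]].
      inversion Hw0; subst.
      destruct (ends_act mul A w0 c c) as [b [Hb Hend]]; auto. { left; auto. }
      destruct (back mul Hassoc A L HU w _ b Hw Hb Hend) as [v [Hv [Hlv Hev]]].
      destruct (d_char mul A (act mul (eval_word mul c w0) w) (eval_word mul c w0))
        as [[_ Hn]|[w' [Hw' [Hx' [-> Hm']]]]].
      { exfalso; apply Hn; eauto. }
      simpl. assert (Hl : (length w' <= L * length w)%nat).
      { apply Nat.le_trans with (length v); auto. }
      apply le_INR in Hl. rewrite mult_INR in Hl.
      pose proof (pos_INR (length w)). nra.
  - intros [_ [Hsc _]] x y z.
    assert (Hxy : forall x y, exists u : option S, x = mul1 mul y u).
    { intros a b. destruct (d_char mul A b a) as [[He _]|[w [_ [Hx _]]]].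
      - exfalso; eapply Hsc; eauto.
      - subst a. destruct w as [|c w].
        + exists None; reflexivity.
        + exists (Some (act mul c w)). simpl. 
          change (act mul b (c::w)) with (act mul (mul b c) w). apply act_mul; auto. }
    assert (Htr : forall x y z, (exists u, z = mul1 mul x u) -> (exists u, z = mul1 mul y u)).
    { intros a b c [u Hu]. destruct (Hxy a b) as [v Hv]. subst.
      destruct u as [s|]; destruct v as [t|]; simpl.
      - exists (Some (mul t s)). simpl. now rewrite Hassoc.
      - exists (Some s); reflexivity.
      - exists (Some t); reflexivity.
      - exists None; reflexivity. }
    split; apply Htr.
Qed.
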